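(* Let $k\geq 2$ be an integer, let $t_0,t_1,\ldots,t_{k-1}$ be arbitrary (real or complex) numbers, and let $(\mathfrak{F}_n^{(k)})_{n\geq 0}$ be the $k$-generalized Fibonacci-like sequence defined by $\mathfrak{F}_i^{(k)}=t_i$ for $0\leq i\leq k-1$ and $\mathfrak{F}_n^{(k)}=\mathfrak{F}_{n-1}^{(k)}+\mathfrak{F}_{n-2}^{(k)}+\cdots+\mathfrak{F}_{n-k}^{(k)}$ for $n\geq k$. Let $\lambda_1,\lambda_2,\ldots,\lambda_k$ be the roots of the characteristic polynomial $P(\lambda)=\lambda^k-\lambda^{k-1}-\cdots-\lambda-1$. Then for all $n\geq k$, $$\mathfrak{F}_n^{(k)}=\sum_{m=1}^{k}\left[\frac{\displaystyle\sum_{p=1}^{k}\left(\lambda_m^{k-p}-\sum_{i=1}^{k-p}\lambda_m^{(k-p)-i}\right)t_{p-1}}{\displaystyle\prod_{j=1,\ j\neq m}^{k}(\lambda_m-\lambda_j)}\right]\lambda_m^n.$$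
   Context: The roots $\lambda_1,\ldots,\lambda_k$ are complex numbers, listed with multiplicity (they are in fact pairwise distinct, so the denominators are nonzero). An empty sum (e.g. $\sum_{i=1}^{0}$ when $p=k$) equals $0$. *)

(* Defs.v *)
From HB Require Import structures.
From mathcomp Require Import all_boot all_order all_algebra.
Set Implicit Arguments. Unset Strict Implicit. Unset Printing Implicit Defensive.
Import Order.TTheory GRing.Theory Num.Theory.
Local Open Scope ring_scope.

Definition kfib_charpoly (C : nzRingType) (k : nat) : {poly C} :=
  'X^k - \sum_(i < k) 'X^i.

Definition is_kfib (C : nzRingType) (k : nat) (t : nat -> C) (F : nat -> C) : Prop :=
  (forall i, (i < k)%N -> F i = t i) /\
  (forall n, (k <= n)%N -> F n = \sum_(1 <= j < k.+1) F (n - j)%N).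

(* Main.v *)
Require Import Defs.
From HB Require Import structures.
From mathcomp Require Import all_boot all_order all_algebra.
From mathcomp Require Import ring lra zify.
Import Order.TTheory GRing.Theory Num.Theory.
Local Open Scope ring_scope.

Lemma revsum (R : nmodType) (r : nat) (f : nat -> R) :
  \sum_(1 <= j < r.+1) f (r - j)%N = \sum_(i < r) f i.
Proof.
rewrite big_add1 /= big_mkord (reindex_inj rev_ord_inj) /=.
apply: eq_bigr => i _; congr f; have := ltn_ord i; lia.
Qed.

Lemma nat_contra (l : nat) : (0 < l)%N ->
  (l.+2 ^ l.+2)%N <> (2 * (2 * l.+1) ^ l.+1)%N.
Proof.
move=> l0 E.
have d : (l.+1 %| l.+2 ^ l.+2)%N.
  by rewrite E dvdn_mull // dvdn_exp // dvdn_mull.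
have c : coprime l.+1 (l.+2 ^ l.+2) by rewrite coprimeXr // coprimenS.
move: c; rewrite /coprime (gcdn_idPl d) => /eqP; lia.
Qed.

Section Main.
Variables (C : numClosedFieldType) (k : nat) (hk : (2 <= k)%N)
  (lambda : 'I_k -> C)
  (hroots : kfib_charpoly C k = \prod_(m < k) ('X - (lambda m)%:P)).

Lemma root_pow m : lambda m ^+ k = \sum_(i < k) lambda m ^+ i.
Proof.
have : (kfib_charpoly C k).[lambda m] = 0.
  by rewrite hroots horner_prod (bigD1 m) //= hornerXsubC subrr mul0r.
rewrite /kfib_charpoly hornerD hornerN hornerXn horner_sum.
under eq_bigr do rewrite hornerXn.
by move/eqP; rewrite subr_eq0 => /eqP.
Qed.

Lemma lam_inj : injective lambda.
Proof.
move=> i j eqij; apply/eqP; apply: contraT => nij; exfalso.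
set a := lambda i.
set R := \prod_(m < k | (m != i) && (m != j)) ('X - (lambda m)%:P).
have hQ : 'X^(k.+1) - 'X^(k) *+ 2 + 1 = ('X - a%:P) * ('X - a%:P) * (('X - 1) * R).
  have -> : 'X^(k.+1) - 'X^(k) *+ 2 + 1 = ('X - 1) * kfib_charpoly C k.
    rewrite /kfib_charpoly mulrBr -subrX1 exprS; ring.
  rewrite hroots (bigD1 i) //= (bigD1 j) 1?eq_sym //= -eqij -/a -/R; ring.
have e0 : a ^+ k.+1 - a ^+ k *+ 2 + 1 = 0.
  have := congr1 (fun p => p.[a]) hQ.
  rewrite /= !hornerM hornerXsubC subrr !mul0r => <-.
  by rewrite !hornerE.
have e1 : a ^+ k *+ k.+1 - a ^+ k.-1 *+ k *+ 2 = 0.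
  have := congr1 (fun p => (p^`()).[a]) hQ.
  rewrite /= !derivM derivXsubC !mul1r !mulr1 hornerD !hornerM hornerD !hornerXsubC subrr.
  rewrite !(mul0r, mulr0, add0r, addr0) => <-.
  by rewrite !derivE !(hornerD, hornerN, hornerMn, hornerXn, horner0) addr0 mulr2n.
have [l kl] : exists l, k = l.+1 by exists k.-1; lia.
have l0 : (0 < l)%N by lia.
rewrite kl /= in e0 e1.
have a0 : a != 0.
  apply/eqP => a0; move: e0; rewrite a0 !expr0n /= mul0rn subr0 add0r => /eqP.
  by rewrite oner_eq0.
set K : C := l.+2%:R.
have ha : a * K = (l.+1).*2%:R.
  have : a ^+ l * (a * K - (l.+1).*2%:R) = 0.
    rewrite -[RHS]e1 /K -mul2n natrM exprS.
    rewrite -[a * a ^+ l *+ _]mulr_natr -[a ^+ l *+ l.+1]mulr_natr mulr2n.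
    move: (l.+2%:R) (l.+1%:R) (a ^+ l) => p q x; ring.
  move/eqP; rewrite mulf_eq0 expf_eq0 (negPf a0) andbF /= subr_eq0.
  by move/eqP.
have step : K ^+ l.+2 - K ^+ l.+2 * (a ^+ l.+2 - a ^+ l.+1 *+ 2 + 1)
    = (a * K) ^+ l.+1 * (K *+ 2 - a * K).
  rewrite !exprS !exprMn !mulr2n.
  move: (a ^+ l) (K ^+ l) => x y; ring.
rewrite e0 mulr0 subr0 ha in step.
have h2 : K *+ 2 - (l.+1).*2%:R = 2%:R.
  by rewrite /K -mul2n natrM mulr2n mulrS [_.+1%:R]mulrS; ring.
rewrite h2 /K -!natrX -natrM in step.
move/eqP: step; rewrite eqr_nat => /eqP step.
move: step; rewrite mulnC -mul2n; exact: nat_contra.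
Qed.

Lemma D_neq0 m : \prod_(j < k | j != m) (lambda m - lambda j) != 0.
Proof.
apply/prodf_neq0 => j jm; rewrite subr_eq0; apply: contra jm.
by move/eqP/lam_inj ->.
Qed.

Lemma coefk (f : {poly C}) : (size f <= k)%N ->
  f`_k.-1 = \sum_(m < k) f.[lambda m] / \prod_(j < k | j != m) (lambda m - lambda j).
Proof.
move=> sf.
pose B m := \prod_(j < k | j != m) ('X - (lambda j)%:P).
have sB m : size (B m) = k.
  rewrite size_prod; last by move=> j _; rewrite polyXsubC_eq0.
  under eq_bigr do rewrite size_XsubC.
  rewrite sum_nat_const.
  have -> : #|[pred j : 'I_k | j != m]| = k.-1 by rewrite cardC1 card_ord.
  lia.
have hB m : (B m)`_k.-1 = 1.
  by have := monic_prod_XsubC (index_enum 'I_k) (fun j => j != m) lambda;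
     rewrite monicE lead_coefE -/(B m) sB => /eqP.
have hBe m x : (B m).[x] = \prod_(j < k | j != m) (x - lambda j).
  by rewrite horner_prod; apply: eq_bigr => j _; rewrite hornerXsubC.
set L := \sum_(m < k) (f.[lambda m] / \prod_(j < k | j != m) (lambda m - lambda j)) *: B m.
have fL : f = L.
  apply/eqP; rewrite -subr_eq0; apply/eqP.
  apply: (@roots_geq_poly_eq0 _ _ [seq lambda i | i <- enum 'I_k]).
  - apply/allP => x /mapP [i _ ->]; rewrite /root hornerD hornerN.
    suff -> : L.[lambda i] = f.[lambda i] by rewrite subrr.
    rewrite /L horner_sum (bigD1 i) //= [X in _ + X = _]big1 ?addr0.
      by rewrite hornerZ hBe divfK ?D_neq0.
    move=> m mi; rewrite hornerZ hBe [X in _ * X = _](bigD1 i) 1?eq_sym //=.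
    by rewrite subrr mul0r mulr0.
  - by rewrite map_inj_uniq ?enum_uniq //; exact: lam_inj.
  - rewrite size_map size_enum_ord.
    apply: leq_trans (size_polyD _ _) _; rewrite size_polyN geq_max sf /=.
    apply: leq_trans (size_sum _ _ _) _; apply/bigmax_leqP => m _.
    by rewrite (leq_trans (size_scale_leq _ _)) // sB.
rewrite {1}fL /L coef_sum; apply: eq_bigr => m _.
by rewrite coefZ hB mulr1.
Qed.

Definition E s := \sum_(m < k) lambda m ^+ s / \prod_(j < k | j != m) (lambda m - lambda j).

Lemma E_small s : (s < k)%N -> E s = (s == k.-1)%:R.
Proof.
move=> sk; rewrite /E.
under eq_bigr do rewrite -hornerXn.
by rewrite -coefk ?size_polyXn // coefXn eq_sym.
Qed.

Lemma E_zero s : (s < k.-1)%N -> E s = 0.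
Proof.
move=> sk; rewrite E_small; last lia.
by have /negPf -> : s != k.-1 by apply/eqP; lia.
Qed.

Lemma E_rec n : E (n + k) = \sum_(s < k) E (n + s).
Proof.
rewrite /E exchange_big /=; apply: eq_bigr => m _.
rewrite exprD root_pow mulr_sumr mulr_suml; apply: eq_bigr => i _.
by rewrite exprD.
Qed.

Lemma splitk (F : nat -> C) r : (0 < r)%N ->
  \sum_(s < r) F s = F 0%N + \sum_(s < r.-1) F s.+1.
Proof. by move=> r0; rewrite -(big_mkord xpredT) (big_ltn r0) big_add1 big_mkord. Qed.

Definition W n q := E (n + (k - q.+1)) - \sum_(s < k - q.+1) E (n + s).

Lemma W_small n : (n < k)%N -> forall q, (q < k)%N -> W n q = (n == q)%:R.
Proof.
elim: n => [|n IH] nk q qk.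
  rewrite /W add0n big1 ?subr0; last first.
    move=> s _; rewrite add0n E_zero //; have := ltn_ord s; lia.
  rewrite E_small; last lia.
  congr (_%:R); case: q qk => [|q] qk /=; first by rewrite subn1 eqxx.
  by have /negPf -> : (k - q.+2)%N != k.-1 by apply/eqP; lia.
case: q qk => [|q] qk.
  rewrite /W.
  have -> : (n.+1 + (k - 1) = n + k)%N by lia.
  rewrite E_rec (splitk (fun s => E (n + s))); last lia.
  rewrite addn0 (E_zero n); last lia.
  rewrite add0r subn1.
  under eq_bigr do rewrite addnS -addSn.
  by rewrite subrr.
have := IH (ltnW nk) q (ltnW qk); rewrite /W.
rewrite (splitk (fun s => E (n + s))); last lia.
rewrite addn0 (E_zero n); last lia.
have -> : (n + (k - q.+1) = n.+1 + (k - q.+2))%N by lia.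
have -> : ((k - q.+1).-1 = k - q.+2)%N by lia.
under eq_bigr do rewrite addnS -addSn.
by rewrite add0r eqSS.
Qed.

Definition G (t : nat -> C) n := \sum_(m < k)
      ((\sum_(1 <= p < k.+1)
          (lambda m ^+ (k - p) - \sum_(1 <= i < (k - p).+1) lambda m ^+ ((k - p) - i))
          * t p.-1)
       / (\prod_(j < k | j != m) (lambda m - lambda j)))
      * lambda m ^+ n.

Lemma G_W t n : G t n = \sum_(q < k) t q * W n q.
Proof.
rewrite /G /W /E.
have inner m : \sum_(1 <= p < k.+1) (lambda m ^+ (k - p) -
     \sum_(1 <= i < (k - p).+1) lambda m ^+ ((k - p) - i)) * t p.-1
   = \sum_(q < k) (lambda m ^+ (k - q.+1) - \sum_(s < k - q.+1) lambda m ^+ s) * t q.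
  rewrite big_add1 /= big_mkord; apply: eq_bigr => q _.
  by rewrite (@revsum _ _ (fun i => lambda m ^+ i)).
under eq_bigr => m _ do rewrite inner mulr_suml mulr_suml.
rewrite exchange_big /=; apply: eq_bigr => q _.
rewrite (exchange_big _ _ (index_enum 'I_k)) /= -sumrB mulr_sumr.
apply: eq_bigr => m _.
rewrite -mulr_suml.
have -> : \sum_(s < k - q.+1) lambda m ^+ (n + s) =
    lambda m ^+ n * \sum_(s < k - q.+1) lambda m ^+ s.
  by rewrite mulr_sumr; apply: eq_bigr => s _; rewrite exprD.
rewrite exprD.
move: (\sum_(s < k - q.+1) lambda m ^+ s) ((\prod_(j < k | j != m) (lambda m - lambda j))^-1)
  (lambda m ^+ n) (lambda m ^+ (k - q.+1)) => S d x y.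
ring.
Qed.

Lemma root_rec m n : (k <= n)%N ->
  lambda m ^+ n = \sum_(1 <= j < k.+1) lambda m ^+ (n - j).
Proof.
move=> kn.
rewrite (eq_big_nat _ _ (F2 := fun j => lambda m ^+ (n - k) * lambda m ^+ (k - j))); last first.
  by move=> j /andP [_ jk]; rewrite -exprD; congr (_ ^+ _); lia.
by rewrite -mulr_sumr (@revsum _ _ (fun i => lambda m ^+ i)) -root_pow -exprD subnK.
Qed.

Lemma G_rec t n : (k <= n)%N -> G t n = \sum_(1 <= j < k.+1) G t (n - j).
Proof.
move=> kn; rewrite /G exchange_big /=; apply: eq_bigr => m _.
by rewrite -mulr_sumr -root_rec.
Qed.

End Main.

Theorem theorem2 (C : numClosedFieldType) (k : nat) (hk : (2 <= k)%N)
  (t : nat -> C) (F : nat -> C) (hF : is_kfib k t F)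
  (lambda : 'I_k -> C)
  (hroots : kfib_charpoly C k = \prod_(m < k) ('X - (lambda m)%:P)) :
  forall n : nat, (k <= n)%N ->
    F n = \sum_(m < k)
      ((\sum_(1 <= p < k.+1)
          (lambda m ^+ (k - p) - \sum_(1 <= i < (k - p).+1) lambda m ^+ ((k - p) - i))
          * t p.-1)
       / (\prod_(j < k | j != m) (lambda m - lambda j)))
      * lambda m ^+ n.
Proof.
suff FG : forall n, F n = G C k lambda t n by move=> n _; exact: FG.
case: hF => hF1 hF2.
elim/ltn_ind => n IH.
case: (ltnP n k) => nk.
  rewrite hF1 // G_W (bigD1 (Ordinal nk)) //= (@W_small C k hk lambda hroots) // eqxx mulr1.
  rewrite big1 ?addr0 // => q qn.
  rewrite (@W_small C k hk lambda hroots) //.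
  have /negPf -> : n != q.
    by apply: contra qn => /eqP nq; apply/eqP; apply: val_inj.
  by rewrite mulr0.
rewrite hF2 // (@G_rec C k hk lambda hroots) //; apply: eq_big_nat => j /andP [j1 jk].
apply: IH; lia.
Qed.
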